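(* Let $\mathcal{X}\subseteq\mathbb{R}^d$ and let $\mathcal{P}$ be a class of distributions of finite point processes on $\mathcal{X}$. Each $Q\in\mathcal{P}$ is identified with its decomposition into $(\Pi_k^Q)_{k\in\mathbb{N}}$ and $(p_k^Q)_{k\in\mathbb{N}_0}$. Set $\mathcal{F}_k:=\{\Pi_k^Q\mid Q\in\mathcal{P}\}$ and for every $k\in\mathbb{N}$ let $S_k:\mathcal{F}_k\times\mathcal{X}^k\to\mathbb{R}$ be a symmetric (strictly) consistent scoring function for the identity functional $\mathrm{id}_{\mathcal{F}_k}$. Let $S_0$ be a (strictly) consistent scoring function for distributions on $\mathbb{N}_0$ (i.e. for the identity functional on $\{(p_k^Q)_{k\in\mathbb{N}_0}\mid Q\in\mathcal{P}\}$). Define $S:\mathcal{P}\times\mathbb{M}_0\to\mathbb{R}$ by $$S\big(((\Pi_k^Q)_{k\in\mathbb{N}},(p_k^Q)_{k\in\mathbb{N}_0}),\{y_1,\dots,y_n\}\big)=S_n(\Pi_n^Q,y_1,\dots,y_n)+S_0\big((p_k^Q)_{k\in\mathbb{N}_0},n\big)$$ for $n\in\mathbb{N}$, and $S\big(((\Pi_k^Q)_{k},(p_k^Q)_{k}),\emptyset\big):=S_0\big((p_k^Q)_{k\in\mathbb{N}_0},0\big)$. Then $S$ is a consistent scoring function for the distribution of the point process (i.e. for the identity functional on $\mathcal{P}$). It is strictly consistent if $S_0$ and all $S_k$, $k\in\mathbb{N}$, are strictly consistent.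
   Context: $\mathbb{M}_0=\mathbb{M}_0(\mathcal{X})$ is the space of finite counting measures on $\mathcal{X}$; a realization $\varphi=\sum_{i=1}^n\delta_{y_i}$ is written as the set $\{y_1,\dots,y_n\}$ (empty if $n=0$). The law of a finite point process is equivalently given by $(p_k)_{k\in\mathbb{N}_0}$, where $p_k$ is the probability of exactly $k$ points, and $(\Pi_k)_{k\in\mathbb{N}}$, where $\Pi_k$ is a symmetric probability measure on $\mathcal{X}^k$ describing the distribution of the points (in any ordering) given that $k$ points occur. A scoring function $S:\mathsf{A}\times\mathsf{O}\to\mathbb{R}$ for a functional $T:\mathcal{F}\to\mathsf{A}$ (where $\mathcal{F}$ is a class of distributions on $\mathsf{O}$) requires $S(a,\cdot)$ to be $F$-integrable for all $a\in\mathsf{A}$, $F\in\mathcal{F}$; it is consistent if $\int S(a,y)\,dF(y)\ge\int S(T(F),y)\,dF(y)$ for all $a\in\mathsf{A}$, $F\in\mathcal{F}$, and strictly consistent if in addition equality implies $a=T(F)$. $S:\mathsf{A}\times\mathcal{X}^n\to\mathbb{R}$ is symmetric if $S(a,y_1,\dots,y_n)=S(a,y_{\pi(1)},\dots,y_{\pi(n)})$ for all $a$, $y$ and permutations $\pi$.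
   Formalization: The Q-integrability of S(a,·) for all a, Q ∈ 𝒫, that is, that S is a scoring function, is a hypothesis rather than part of the conclusion. The statement above fails without it. *)

(* Defs.v *)
From HB Require Import structures.
From mathcomp Require Import all_boot all_order all_algebra all_fingroup.
From mathcomp Require Import all_classical all_reals all_analysis measurable_realfun.
Set Implicit Arguments. Unset Strict Implicit. Unset Printing Implicit Defensive.
Import Order.TTheory GRing.Theory Num.Theory.
Local Open Scope classical_set_scope.
Local Open Scope ring_scope.
Local Open Scope ereal_scope.

Section ScoringDefs.
Context {R : realType}.

Definition perm_tuple (T : Type) (k : nat) (s : 'S_k) (y : k.-tuple T) : k.-tuple T :=
  [tuple tnth y (s i) | i < k].

Definition sym_prob d (T : measurableType d) (k : nat) (P : probability (k.-tuple T) R) :=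
  forall (s : 'S_k) (A : set (k.-tuple T)), measurable A ->
    P (perm_tuple s @^-1` A) = P A.

Definition symmetric_score (A T : Type) (k : nat) (S : A -> k.-tuple T -> R) :=
  forall (a : A) (s : 'S_k) (y : k.-tuple T), S a (perm_tuple s y) = S a y.

(** Scoring functions for the identity functional on a class F of
    distributions on T (so the action space is F itself). *)
Definition is_scoring d (T : measurableType d) (F : set (probability T R))
    (S : probability T R -> T -> R) :=
  forall a Q, F a -> F Q -> Q.-integrable setT (fun x => (S a x)%:E).

Definition consistent d (T : measurableType d) (F : set (probability T R))
    (S : probability T R -> T -> R) :=
  is_scoring F S /\
  forall a Q, F a -> F Q ->
    \int[Q]_x (S Q x)%:E <= \int[Q]_x (S a x)%:E.

Definition strictly_consistent d (T : measurableType d) (F : set (probability T R))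
    (S : probability T R -> T -> R) :=
  consistent F S /\
  forall a Q, F a -> F Q ->
    \int[Q]_x (S a x)%:E = \int[Q]_x (S Q x)%:E -> a = Q.

(** Distribution of a finite point process with points in T, given by its
    decomposition: the law (p_k)_k of the number of points (a probability
    on N_0) and the laws Pi_k of the points given that k points occur. *)
Record ppdist d (T : measurableType d) := PPDist {
  pp_count : probability nat R;
  pp_pts : forall k : nat, probability (k.-tuple T) R }.

Definition pp_on d (T : measurableType d) (X : set T) (Q : ppdist T) :=
  forall k : nat, sym_prob (pp_pts Q k) /\
     pp_pts Q k [set y | forall i, X (tnth y i)] = 1.

(** Realizations {y_1,...,y_n} of the process are represented by (n, y) with
    y an n-tuple (any ordering); functions of realizations are families
    f n : n.-tuple T -> \bar R. *)
Definition pp_term d (T : measurableType d) (Q : ppdist T)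
    (f : forall n : nat, n.-tuple T -> \bar R) (n : nat) : \bar R :=
  pp_count Q [set n] * integral (pp_pts Q n) setT (f n).

Definition pp_expect d (T : measurableType d) (Q : ppdist T)
    (f : forall n : nat, n.-tuple T -> \bar R) : \bar R :=
  \sum_(0 <= n <oo) pp_term Q f n.

Definition pp_integrable d (T : measurableType d) (Q : ppdist T)
    (f : forall n : nat, n.-tuple T -> \bar R) :=
  (forall n : nat, measurable_fun [set: n.-tuple T] (f n)) /\
  pp_expect Q (fun n y => `|f n y|) < +oo.

(** two decompositions describing the same law of the point process
    (Pi_k is irrelevant when p_k = 0) *)
Definition same_law d (T : measurableType d) (Q Q' : ppdist T) :=
  pp_count Q = pp_count Q' /\
  forall k : nat, (0 < k)%N -> (0 < pp_count Q [set k])%E -> pp_pts Q k = pp_pts Q' k.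

Definition pp_scoring d (T : measurableType d) (P : set (ppdist T))
    (S : ppdist T -> forall n : nat, n.-tuple T -> R) :=
  forall a Q, P a -> P Q -> pp_integrable Q (fun n y => (S a n y)%:E).

Definition pp_consistent d (T : measurableType d) (P : set (ppdist T))
    (S : ppdist T -> forall n : nat, n.-tuple T -> R) :=
  pp_scoring P S /\
  forall a Q, P a -> P Q ->
    pp_expect Q (fun n y => (S Q n y)%:E) <= pp_expect Q (fun n y => (S a n y)%:E).

Definition pp_strictly_consistent d (T : measurableType d) (P : set (ppdist T))
    (S : ppdist T -> forall n : nat, n.-tuple T -> R) :=
  pp_consistent P S /\
  forall a Q, P a -> P Q ->
    pp_expect Q (fun n y => (S a n y)%:E) = pp_expect Q (fun n y => (S Q n y)%:E) ->
    same_law a Q.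

Definition Fk d (T : measurableType d) (P : set (ppdist T)) (k : nat) :
  set (probability (k.-tuple T) R) := [set Pi | exists2 Q, P Q & Pi = pp_pts Q k].

Definition F0 d (T : measurableType d) (P : set (ppdist T)) :
  set (probability nat R) := [set p | exists2 Q, P Q & p = pp_count Q].

Definition pp_score d (T : measurableType d)
    (Sk : forall k : nat, probability (k.-tuple T) R -> k.-tuple T -> R)
    (S0 : probability nat R -> nat -> R)
    (Q : ppdist T) (n : nat) (y : n.-tuple T) : R :=
  ((if n is 0 then 0 else Sk n (pp_pts Q n) y) + S0 (pp_count Q) n)%R.

End ScoringDefs.
Arguments Fk {R d T} P k.

(* Main.v *)
Require Import Defs.
From HB Require Import structures.
From mathcomp Require Import all_boot all_order all_algebra all_fingroup.
From mathcomp Require Import all_classical all_reals all_analysis measurable_realfun.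
From mathcomp Require Import lra.
Import Order.TTheory GRing.Theory Num.Theory.
Local Open Scope classical_set_scope.
Local Open Scope ring_scope.
Local Open Scope ereal_scope.

Section H.
Context {R : realType}.

Lemma nat_mfun (D : set nat) (f : nat -> \bar R) : measurable_fun D f.
Proof. by move=> _ Y _. Qed.

Lemma setT_bigcup1 : [set: nat] = \bigcup_n [set n].
Proof. by apply/seteqP; split => [n _|n]; [exists n|]. Qed.

Lemma triv1 : trivIset [set: nat] (fun n => [set n]).
Proof. by move=> i j _ _ [x [/= -> ->]]. Qed.

Lemma int_set1 (mu : {measure set nat -> \bar R}) (f : nat -> \bar R) n :
  \int[mu]_(x in [set n]) f x = mu [set n] * f n.
Proof.
rewrite (eq_integral (fun=> f n)); last by move=> x /set_mem ->.
by rewrite integral_cst// muleC.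
Qed.

Lemma nat_int (mu : {measure set nat -> \bar R}) (f : nat -> \bar R) :
  mu.-integrable setT f ->
  \int[mu]_(x in setT) f x = \sum_(n <oo) mu [set n] * f n.
Proof.
move=> fi; rewrite setT_bigcup1 integral_bigcup//; last by rewrite -setT_bigcup1.
  by apply: eq_eseriesr => n _; rewrite int_set1.
exact: triv1.
Qed.

Lemma nat_int_ge0 (mu : {measure set nat -> \bar R}) (f : nat -> \bar R) :
  (forall n, 0 <= f n) ->
  \int[mu]_(x in setT) f x = \sum_(n <oo) mu [set n] * f n.
Proof.
move=> f0; rewrite setT_bigcup1 ge0_integral_bigcup//.
- by apply: eq_eseriesr => n _; rewrite int_set1.
- exact: triv1.
Qed.
End H.

Section Main.
Context {R : realType} (dim : nat).
Local Notation T := (dim.-tuple R).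
Variables (P : set (@ppdist R _ T))
  (Sk : forall k : nat, probability (k.-tuple T) R -> k.-tuple T -> R)
  (S0 : probability nat R -> nat -> R).
Hypothesis HS : pp_scoring P (pp_score Sk S0).
Hypothesis Hk : forall k, (0 < k)%N -> is_scoring (Fk P k) (Sk k).
Hypothesis H0 : is_scoring (F0 P) S0.
Variable Q : @ppdist R _ T.
Hypothesis PQ : P Q.

Let S := pp_score Sk S0.
Let mu := pp_count Q.
Definition Ia (a : @ppdist R _ T) n := \int[pp_pts Q n]_y (Sk n (pp_pts a n) y)%:E.
Definition ska (a : @ppdist R _ T) n : R := if n is 0 then 0%R else fine (Ia a n).
Definition s0a (a : @ppdist R _ T) n : R := S0 (pp_count a) n.
Definition ga (a : @ppdist R _ T) n : R := (ska a n + s0a a n)%R.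

Lemma Ia_int a n : P a -> (0 < n)%N ->
  (pp_pts Q n).-integrable setT (fun y => (Sk n (pp_pts a n) y)%:E).
Proof.
move=> Pa n0; apply: (Hk _ n0); [by exists a|by exists Q].
Qed.

Lemma Ia_fin a n : P a -> (0 < n)%N -> Ia a n \is a fin_num.
Proof. by move=> Pa n0; apply: integrable_fin_num => //; exact: Ia_int. Qed.

Lemma L1 a n : P a -> (pp_pts Q n).-integrable setT (fun y => (S a n y)%:E).
Proof.
move=> Pa; case: n => [|n].
  exact: (finite_measure_integrable_cst (pp_pts Q 0) (0 + S0 (pp_count a) 0)%R measurableT).
have := integrableD measurableT (@Ia_int a n.+1 Pa (ltn0Sn n))
  (finite_measure_integrable_cst (pp_pts Q n.+1) (S0 (pp_count a) n.+1) measurableT).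
apply: eq_integrable => // y _.
Qed.

Lemma L2 a n : P a -> \int[pp_pts Q n]_y (S a n y)%:E = (ga a n)%:E.
Proof.
move=> Pa; case: n => [|n].
  rewrite -[RHS]mule1 -(probability_setT (pp_pts Q 0)) -integral_cst //.
under eq_integral do rewrite /S /pp_score EFinD.
rewrite integralD //; last 2 first.
- exact: Ia_int.
- exact: (finite_measure_integrable_cst (pp_pts Q n.+1) (S0 (pp_count a) n.+1) measurableT).
rewrite integral_cst //.
set m := (X in (_ * X)%E).
have -> : m = 1 by rewrite /m; exact: probability_setT.
rewrite mule1 /ga EFinD /ska fineK //.
exact: Ia_fin.
Qed.

Lemma L3 a : P a -> mu.-integrable setT (fun n => (ga a n)%:E).
Proof.
move=> Pa; apply/integrableP; split; first by move=> _ Y _.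
rewrite nat_int_ge0 //.
have [_ +] := HS _ _ Pa PQ.
apply: le_lt_trans.
rewrite /pp_expect /pp_term; apply: lee_nneseries => n _.
  by move=> _; apply: mule_ge0.
rewrite /mu; apply: lee_wpmul2l; first done.
rewrite -L2 //; apply: le_abse_integral => //.
exact: measurable_int _ (L1 a n Pa).
Qed.

Lemma L4 a : P a -> pp_expect Q (fun n y => (S a n y)%:E) = \int[mu]_n (ga a n)%:E.
Proof.
move=> Pa; rewrite nat_int; last exact: L3.
rewrite /pp_expect /pp_term; apply: eq_eseriesr => n _.
by rewrite L2.
Qed.

Lemma s0_int a : P a -> mu.-integrable setT (fun n => (s0a a n)%:E).
Proof. by move=> Pa; apply: H0; [exists a|exists Q]. Qed.

Lemma sk_int a : P a -> mu.-integrable setT (fun n => (ska a n)%:E).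
Proof.
move=> Pa; have := integrableB measurableT (L3 a Pa) (s0_int a Pa).
apply: eq_integrable => // n _.
by rewrite /ga -EFinB addrK.
Qed.

Lemma L5 a : P a -> pp_expect Q (fun n y => (S a n y)%:E) =
  \int[mu]_n (ska a n)%:E + \int[mu]_n (s0a a n)%:E.
Proof.
move=> Pa; rewrite L4 // -integralD //; [exact: sk_int|exact: s0_int].
Qed.

Section cons.
Hypothesis Hkc : forall k, (0 < k)%N -> consistent (Fk P k) (Sk k).
Hypothesis H0c : consistent (F0 P) S0.

Lemma sk_le a n : P a -> (ska Q n)%:E <= (ska a n)%:E.
Proof.
move=> Pa; case: n => [|n] //=.
rewrite !fineK; [|exact: Ia_fin|exact: Ia_fin].
by rewrite /Ia; apply: (Hkc _ (ltn0Sn n)).2; [exists a|exists Q].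
Qed.

Lemma cons_main a : P a ->
  pp_expect Q (fun n y => (S Q n y)%:E) <= pp_expect Q (fun n y => (S a n y)%:E).
Proof.
move=> Pa; rewrite !L5 //; apply: leeD.
  apply: le_integral => //; [exact: sk_int|exact: sk_int|].
  by move=> n _; exact: sk_le.
by apply: H0c.2; [exists a|exists Q].
Qed.
End cons.

Section strict.
Hypothesis Hks : forall k, (0 < k)%N -> strictly_consistent (Fk P k) (Sk k).
Hypothesis H0s : strictly_consistent (F0 P) S0.

Lemma strict_main a : P a ->
  pp_expect Q (fun n y => (S a n y)%:E) = pp_expect Q (fun n y => (S Q n y)%:E) ->
  same_law a Q.
Proof.
move=> Pa E.
have Hkc : forall k, (0 < k)%N -> consistent (Fk P k) (Sk k) by move=> k k0; case: (Hks _ k0).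
have H0c : consistent (F0 P) S0 by case: H0s.
have le1 := le_integral measurableT (sk_int Q PQ) (sk_int a Pa) (fun n _ => sk_le Hkc a n Pa).
have le2 : \int[mu]_n (s0a Q n)%:E <= \int[mu]_n (s0a a n)%:E.
  by apply: H0c.2; [exists a|exists Q].
rewrite !L5 // in E.
have fa1 := integrable_fin_num measurableT (sk_int a Pa).
have fq1 := integrable_fin_num measurableT (sk_int Q PQ).
have fa2 := integrable_fin_num measurableT (s0_int a Pa).
have fq2 := integrable_fin_num measurableT (s0_int Q PQ).
move: E le1 le2.
rewrite -(fineK fa1) -(fineK fa2) -(fineK fq1) -(fineK fq2) -!EFinD.
move=> [Eq]; rewrite !lee_fin => l1 l2.
have e1 : fine (\int[mu]_n (ska a n)%:E) = fine (\int[mu]_n (ska Q n)%:E) by lra.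
have e2 : fine (\int[mu]_n (s0a a n)%:E) = fine (\int[mu]_n (s0a Q n)%:E) by lra.
have {}e1 : \int[mu]_n (ska a n)%:E = \int[mu]_n (ska Q n)%:E.
  by rewrite -(fineK fa1) -(fineK fq1) e1.
have {}e2 : \int[mu]_n (s0a a n)%:E = \int[mu]_n (s0a Q n)%:E.
  by rewrite -(fineK fa2) -(fineK fq2) e2.
have pc : pp_count a = pp_count Q.
  by apply: H0s.2 e2; [exists a|exists Q].
split => // k k0; rewrite pc => pk.
have h : \int[mu]_n ((ska a n - ska Q n)%R)%:E = 0.
  under eq_integral do rewrite EFinB.
  rewrite integralB_EFin //; [|exact: sk_int|exact: sk_int].
  by rewrite e1 subee // -e1.
have hge : forall n, 0 <= ((ska a n - ska Q n)%R)%:E.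
  by move=> n; rewrite lee_fin subr_ge0 -lee_fin; exact: sk_le.
have hk : mu [set k] * ((ska a k - ska Q k)%R)%:E <= 0.
  rewrite -(int_set1 mu (fun n => ((ska a n - ska Q n)%R)%:E)) -h; apply: ge0_subset_integral => //.
rewrite pmule_rle0 // in hk.
have ek : ska a k = ska Q k.
  by apply/eqP; rewrite -subr_eq0 eq_le -lee_fin hk /= -lee_fin hge.
case: k k0 pk hk ek => [//|k] _ _ _.
move=> ek; have eI : Ia a k.+1 = Ia Q k.+1.
  rewrite -(fineK (Ia_fin a k.+1 Pa (ltn0Sn k))) -(fineK (Ia_fin Q k.+1 PQ (ltn0Sn k))).
  by congr EFin.
by apply: (Hks _ (ltn0Sn k)).2 eI; [exists a|exists Q].
Qed.
End strict.
End Main.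

Local Close Scope ereal_scope.

Theorem proposition3p4 (R : realType) (dim : nat)
    (X : set (dim.-tuple R))
    (P : set (@ppdist R _ (dim.-tuple R)))
    (Sk : forall k : nat,
        probability (k.-tuple (dim.-tuple R)) R -> k.-tuple (dim.-tuple R) -> R)
    (S0 : probability nat R -> nat -> R) :
  measurable X ->
  (forall Q, P Q -> pp_on X Q) ->
  (forall k : nat, (0 < k)%N -> symmetric_score (Sk k)) ->
  (* S : P x M_0 -> R, defined from S_0 and the S_k, is a scoring function,
     i.e. S(a, .) is integrable under every Q in P *)
  pp_scoring P (pp_score Sk S0) ->
  ((forall k : nat, (0 < k)%N -> consistent (Fk P k) (Sk k)) ->
   consistent (F0 P) S0 ->
   pp_consistent P (pp_score Sk S0)) /\
  ((forall k : nat, (0 < k)%N -> strictly_consistent (Fk P k) (Sk k)) ->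
   strictly_consistent (F0 P) S0 ->
   pp_strictly_consistent P (pp_score Sk S0)).
Proof.
move=> _ _ _ HS.
have cons : (forall k : nat, (0 < k)%N -> consistent (Fk P k) (Sk k)) ->
   consistent (F0 P) S0 -> pp_consistent P (pp_score Sk S0).
  move=> Hkc H0c; split; first exact: HS.
  move=> a Q Pa PQ.
  have Hk : forall k, (0 < k)%N -> is_scoring (Fk P k) (Sk k).
    by move=> k k0; case: (Hkc _ k0).
  exact: (cons_main _ _ _ _ HS Hk H0c.1 Q PQ Hkc H0c a Pa).
split; first exact: cons.
move=> Hks H0s.
have Hkc : forall k, (0 < k)%N -> consistent (Fk P k) (Sk k).
  by move=> k k0; case: (Hks _ k0).
have H0c : consistent (F0 P) S0 by case: H0s.
split; first exact: (cons Hkc H0c).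
move=> a Q Pa PQ.
have Hk : forall k, (0 < k)%N -> is_scoring (Fk P k) (Sk k).
  by move=> k k0; case: (Hkc _ k0).
exact: (strict_main _ _ _ _ HS Hk H0c.1 Q PQ Hks H0s a Pa).
Qed.
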